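(* Let $f:[a,b]\to\mathbb F$ and assume that $f^*:[a,b]\to\mathbb F$, $f^*(s)=f(s^* )$, is $g$-continuous on $[a,b]$. Then $f$ is $g$-continuous on $[a,b]$ if and only if $f(t)=f(s)$ for all $t,s\in[a,b]$ with $g(t)=g(s)$.
   Context: Let $g:\mathbb R\to\mathbb R$ be nondecreasing and left-continuous, $\mathbb F\in\{\mathbb R,\mathbb C\}$. $\Delta g(t)=g(t^+)-g(t)$, $D_g=\{t:\Delta g(t)>0\}$, $C_g=\{t: g\text{ constant on }(t-\varepsilon,t+\varepsilon)\text{ for some }\varepsilon>0\}=\bigcup_{n\in\Lambda}(a_n,b_n)$ (disjoint union of connected components), $N_g^-=\{a_n\}\setminus D_g$, $N_g^+=\{b_n\}\setminus D_g$. Fix $a<b$ with $a\notin N_g^-\cup D_g$, $b\notin D_g\cup C_g\cup N_g^+$. For $s\in[a,b]$, $s^*=s$ if $s\notin C_g$ and $s^*=b_n$ if $s\in(a_n,b_n)$. A function $u:D\subset\mathbb R\to\mathbb F$ is $g$-continuous at $t\in D$ if for every $\varepsilon>0$ there is $\delta>0$ with $|u(t)-u(s)|<\varepsilon$ for all $s\in D$ with $|g(t)-g(s)|<\delta$; it is $g$-continuous on $D$ if this holds at every $t\in D$. *)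

(* Defs.v *)
From Stdlib Require Import Reals ClassicalEpsilon.
From Coquelicot Require Import Coquelicot.
Open Scope R_scope.

Definition nondecreasing (g : R -> R) : Prop := forall x y, x <= y -> g x <= g y.

Definition left_continuous (g : R -> R) : Prop :=
  forall t, filterlim g (at_left t) (locally (g t)).

Definition Dg (g : R -> R) (t : R) : Prop :=
  exists l, filterlim g (at_right t) (locally l) /\ l - g t > 0.

Definition Cg (g : R -> R) (t : R) : Prop :=
  exists eps, 0 < eps /\
    forall x y, t - eps < x < t + eps -> t - eps < y < t + eps -> g x = g y.

(* c is the left endpoint a_n of a connected component (a_n, b_n) of C_g
   (b_n possibly +oo) *)
Definition left_end (g : R -> R) (c : R) : Prop :=
  exists d : Rbar, Rbar_lt c d /\ (forall x, Rbar_lt c x -> Rbar_lt x d -> Cg g x)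
    /\ ~ Cg g c /\ (forall r : R, d = Finite r -> ~ Cg g r).

(* c is the right endpoint b_n of a connected component (a_n, b_n) of C_g
   (a_n possibly -oo) *)
Definition right_end (g : R -> R) (c : R) : Prop :=
  exists d : Rbar, Rbar_lt d c /\ (forall x, Rbar_lt d x -> Rbar_lt x c -> Cg g x)
    /\ ~ Cg g c /\ (forall r : R, d = Finite r -> ~ Cg g r).

Definition Nminus (g : R -> R) (t : R) : Prop := left_end g t /\ ~ Dg g t.
Definition Nplus (g : R -> R) (t : R) : Prop := right_end g t /\ ~ Dg g t.

(* s^* = s if s ∉ C_g; s^* = b_n if s ∈ (a_n, b_n), where b_n is the supremum of
   the points x ≥ s such that [s, x] ⊆ C_g. *)
Definition star (g : R -> R) (s : R) : R :=
  match excluded_middle_informative (Cg g s) with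
  | left _ => real (Lub_Rbar (fun x => s <= x /\ forall y, s <= y <= x -> Cg g y))
  | right _ => s
  end.

Definition g_continuous_at {V : Type} (dist : V -> V -> R) (g : R -> R)
    (D : R -> Prop) (u : R -> V) (t : R) : Prop :=
  forall eps, 0 < eps -> exists delta, 0 < delta /\
    forall s, D s -> Rabs (g t - g s) < delta -> dist (u t) (u s) < eps.

Definition g_continuous {V : Type} (dist : V -> V -> R) (g : R -> R)
    (D : R -> Prop) (u : R -> V) : Prop :=
  forall t, D t -> g_continuous_at dist g D u t.

Definition Icc (a b : R) (x : R) : Prop := a <= x <= b.

Definition distR (x y : R) : R := Rabs (x - y).
Definition distC (x y : C) : R := Cmod (x - y).

(* Main.v *)
Require Import Defs.
From Stdlib Require Import Reals Lra Classical ClassicalEpsilon.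
From Coquelicot Require Import Coquelicot.
Open Scope R_scope.

Lemma lub_fin (E : R -> Prop) (c x0 : R) :
  (forall x, E x -> x <= c) -> E x0 ->
  exists m, Lub_Rbar E = Finite m /\ m <= c /\ x0 <= m.
Proof.
  intros Hc H0. destruct (Lub_Rbar_correct E) as [Hub Hl].
  assert (H1 : Rbar_le x0 (Lub_Rbar E)) by (apply Hub; auto).
  assert (H2 : Rbar_le (Lub_Rbar E) c) by (apply Hl; intros x Hx; simpl; auto).
  destruct (Lub_Rbar E) as [m| |]; simpl in *; try contradiction.
  exists m; auto.
Qed.

Lemma lub_ub (E : R -> Prop) (m x : R) : Lub_Rbar E = Finite m -> E x -> x <= m.
Proof.
  intros Hm Hx. destruct (Lub_Rbar_correct E) as [Hub _].
  rewrite Hm in Hub. exact (Hub x Hx).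
Qed.

Lemma lub_approx (E : R -> Prop) (m y : R) : Lub_Rbar E = Finite m -> y < m ->
  exists x, E x /\ y < x.
Proof.
  intros Hm Hy. apply NNPP; intro Hn.
  destruct (Lub_Rbar_correct E) as [_ Hl]. rewrite Hm in Hl.
  assert (Rbar_le m y).
  { apply Hl. intros x Hx. simpl. destruct (Rle_dec x y); auto.
    exfalso; apply Hn; exists x; split; auto; lra. }
  simpl in H; lra.
Qed.

Lemma const_on (g : R -> R) (s y : R) : s <= y ->
  (forall z, s <= z <= y -> Cg g z) -> g y = g s.
Proof.
  intros Hsy HC.
  set (F := fun x => s <= x <= y /\ g x = g s).
  destruct (lub_fin F y s) as [m [Hm [Hmy Hsm]]].
  { intros x Hx; unfold F in Hx; lra. }
  { unfold F; split; [lra|auto]. }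
  destruct (HC m ltac:(lra)) as [eps [Heps Hg]].
  destruct (lub_approx F m (m - eps) Hm ltac:(lra)) as [z [[Hz1 Hz2] Hz3]].
  assert (Hzm : z <= m) by (apply (lub_ub F); auto; split; auto).
  assert (Hgm : g m = g s) by (rewrite <- Hz2; apply Hg; lra).
  destruct (Rle_lt_dec y m) as [Hym|Hym].
  - replace y with m by lra. auto.
  - exfalso. set (w := Rmin (m + eps/2) y).
    assert (Hw1 : m < w) by (unfold w; apply Rmin_case; lra).
    assert (Hw2 : w <= y) by (unfold w; apply Rmin_r).
    assert (Hw3 : w <= m + eps/2) by (unfold w; apply Rmin_l).
    assert (F w). { split; [lra|]. rewrite <- Hgm. apply Hg; lra. }
    pose proof (lub_ub F m w Hm H). lra.
Qed.

Lemma star_prop (g : R -> R) (a b s : R) :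
  left_continuous g -> ~ Cg g b -> a <= s <= b ->
  a <= star g s <= b /\ g (star g s) = g s.
Proof.
  intros Hlc Hb Hs. unfold star.
  destruct (excluded_middle_informative (Cg g s)) as [Hc|Hc]; [|split; auto].
  set (E := fun x => s <= x /\ forall y, s <= y <= x -> Cg g y).
  destruct (lub_fin E b s) as [L [HL [HLb HsL]]].
  { intros x [Hx1 Hx2]. destruct (Rle_dec x b) as [|Hn]; auto.
    exfalso; apply Hb; apply Hx2; lra. }
  { split; [lra|]. intros y Hy. replace y with s by lra. auto. }
  rewrite HL; simpl. split; [lra|].
  assert (Hbel : forall y, s <= y < L -> g y = g s).
  { intros y Hy. destruct (lub_approx E L y HL ltac:(lra)) as [x [[Hx1 Hx2] Hx3]].
    apply const_on; [lra|]. intros z Hz; apply Hx2; lra. }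
  destruct (Req_dec L s) as [->|HLs]; auto.
  apply NNPP; intro Hne.
  set (e := Rabs (g L - g s)).
  assert (He : 0 < e) by (unfold e; apply Rabs_pos_lt; lra).
  pose proof (proj1 (filterlim_locally g (g L)) (Hlc L) (mkposreal e He)) as H.
  destruct H as [d Hd]. simpl in Hd.
  set (y := Rmax s (L - d/2)).
  assert (Hy1 : s <= y) by (unfold y; apply Rmax_l).
  assert (Hy2 : L - d/2 <= y) by (unfold y; apply Rmax_r).
  assert (Hy3 : y < L) by (unfold y; pose proof (cond_pos d); apply Rmax_case; lra).
  assert (Hball : ball L d y).
  { change (Rabs (y - L) < d). rewrite Rabs_left1; pose proof (cond_pos d); lra. }
  specialize (Hd y Hball Hy3). change (Rabs (g y - g L) < e) in Hd.
  rewrite (Hbel y ltac:(lra)) in Hd. unfold e in Hd.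
  rewrite <- Rabs_Ropp in Hd. replace (- (g s - g L)) with (g L - g s) in Hd by ring. lra.
Qed.

Lemma generic {V : Type} (dist : V -> V -> R) (g : R -> R) (a b : R)
  (Hd : forall x y : V, (forall eps, 0 < eps -> dist x y < eps) -> x = y)
  (g_lc : left_continuous g) (Hb : ~ Cg g b) (f : R -> V) :
  g_continuous dist g (Icc a b) (fun s => f (star g s)) ->
  (g_continuous dist g (Icc a b) f <->
   (forall t s, Icc a b t -> Icc a b s -> g t = g s -> f t = f s)).
Proof.
  intros Hstar; split.
  - intros Hf t s Ht Hs Hg. apply Hd. intros eps Heps.
    destruct (Hf t Ht eps Heps) as [d [Hd0 Hd1]]. apply Hd1; auto.
    rewrite Hg, Rminus_eq_0, Rabs_R0; auto.
  - intros Hf t Ht eps Heps.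
    destruct (Hstar t Ht eps Heps) as [d [Hd0 Hd1]]. exists d; split; auto.
    intros s Hs Hgs. specialize (Hd1 s Hs Hgs).
    destruct (star_prop g a b t g_lc Hb Ht) as [Ht1 Ht2].
    destruct (star_prop g a b s g_lc Hb Hs) as [Hs1 Hs2].
    rewrite (Hf t (star g t)), (Hf s (star g s)); auto.
Qed.

Theorem proposition5p3 (g : R -> R) (a b : R)
  (g_nd : nondecreasing g) (g_lc : left_continuous g) (hab : a < b)
  (ha : ~ Nminus g a /\ ~ Dg g a)
  (hb : ~ Dg g b /\ ~ Cg g b /\ ~ Nplus g b) :
  (forall f : R -> R,
     g_continuous distR g (Icc a b) (fun s => f (star g s)) ->
     (g_continuous distR g (Icc a b) f <->
      (forall t s, Icc a b t -> Icc a b s -> g t = g s -> f t = f s)))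
  /\
  (forall f : R -> C,
     g_continuous distC g (Icc a b) (fun s => f (star g s)) ->
     (g_continuous distC g (Icc a b) f <->
      (forall t s, Icc a b t -> Icc a b s -> g t = g s -> f t = f s))).
Proof.
  destruct hb as [_ [Hb _]]. split; intros f; apply generic; auto.
  - intros x y H. unfold distR in H. apply NNPP; intro Hn.
    assert (0 < Rabs (x - y)) by (apply Rabs_pos_lt; lra).
    specialize (H _ H0). lra.
  - intros x y H. unfold distC in H.
    assert (Cmod (x - y) = 0).
    { destruct (Req_dec (Cmod (x - y)) 0) as [|Hn]; auto.
      pose proof (Cmod_ge_0 (x - y)).
      assert (0 < Cmod (x - y)) by lra. specialize (H _ H1). lra. }
    apply Cmod_eq_0 in H0.
    replace x with ((x - y) + y)%C by ring. rewrite H0. ring.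
Qed.
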